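(* Let $p\in(-1,\infty)$, $\beta\ge0$, and $\gamma_*>0$ satisfy: - $\gamma_*\in[(1+\beta)^{-p},1]$ if $p\ge0$; - $\gamma_*\in[1,(1+\beta)^{-p}]$ if $p\le0$. For $\alpha\in(0,1)$, let $\omega_1^*(\alpha,\gamma_* )$ denote the first component of the unique solution $(\omega_1,\omega_2)$, with $0<\omega_1\le\omega_2$, of the system $$\alpha\,\omega_1+(1-\alpha)\,\omega_2=1+\beta,\qquad \frac{\alpha}{\omega_1^{p+1}}+\frac{1-\alpha}{\omega_2^{p+1}}=\gamma_*.$$ Then $\alpha\mapsto\omega_1^*(\alpha,\gamma_* )$ is non-decreasing on $(0,1)$.
   Context: The system in the claim has, for every $\alpha\in(0,1)$ and every $\beta$, $\gamma_*$ as stated, exactly one solution with $0<\omega_1\le\omega_2$, so $\omega_1^*(\alpha,\gamma_* )$ is well defined. *)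

(* Defs.v *)
From Stdlib Require Import Reals.
Open Scope R_scope.

Definition is_sol (p beta gamma alpha w1 w2 : R) : Prop :=
  0 < w1 /\ w1 <= w2 /\
  alpha * w1 + (1 - alpha) * w2 = 1 + beta /\
  alpha / Rpower w1 (p + 1) + (1 - alpha) / Rpower w2 (p + 1) = gamma.

(* Main.v *)
Require Import Defs.
From Stdlib Require Import Reals Lra.
Open Scope R_scope.

Lemma chord_lt (q x y z : R) : 0 < q -> 0 < x -> x < y -> y < z ->
  Rpower y (-q) < Rpower x (-q) + (Rpower z (-q) - Rpower x (-q)) / (z - x) * (y - x).
Proof.
  intros hq hx hxy hyz.
  set (f := fun t => Rpower t (-q)).
  set (f' := fun t => -q * Rpower t (-q - 1)).
  assert (D : forall c, 0 < c -> derivable_pt_lim f c (f' c)).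
  { intros c hc. unfold f, f'. apply derivable_pt_lim_power; exact hc. }
  destruct (MVT_cor2 f f' x y hxy) as [c1 [E1 [H1 H1']]].
  { intros c [hc _]. apply D; lra. }
  destruct (MVT_cor2 f f' y z hyz) as [c2 [E2 [H2 H2']]].
  { intros c [hc _]. apply D; lra. }
  assert (Hm : f' c1 < f' c2).
  { unfold f'. replace (-q - 1) with (-(q+1)) by ring.
    rewrite !Rpower_Ropp.
    assert (P1 : Rpower c1 (q+1) < Rpower c2 (q+1)) by (apply Rlt_Rpower_l; lra).
    assert (P0 : 0 < Rpower c1 (q+1)) by (unfold Rpower; apply exp_pos).
    assert (Hi : / Rpower c2 (q+1) < / Rpower c1 (q+1)) by (apply Rinv_lt_contravar; nra).
    nra. }
  change (f y < f x + (f z - f x) / (z - x) * (y - x)).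
  assert (Hs : f' c1 < (f z - f x) / (z - x)).
  { apply Rmult_lt_reg_r with (z - x); [lra|].
    unfold Rdiv. rewrite Rmult_assoc, Rinv_l by lra. nra. }
  assert (0 < y - x) by lra. nra.
Qed.

Theorem mainTheorem7 (p beta gamma : R)
  (hp : -1 < p) (hbeta : 0 <= beta) (hgamma : 0 < gamma)
  (hpos : 0 <= p -> Rpower (1 + beta) (- p) <= gamma <= 1)
  (hneg : p <= 0 -> 1 <= gamma <= Rpower (1 + beta) (- p)) :
  forall (a a' w1 w2 w1' w2' : R),
    0 < a -> a <= a' -> a' < 1 ->
    is_sol p beta gamma a w1 w2 ->
    is_sol p beta gamma a' w1' w2' ->
    w1 <= w1'.
Proof.
  intros a a' w1 w2 w1' w2' ha haa ha' [p1 [l1 [m1 g1]]] [p1' [l1' [m1' g1']]].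
  destruct (Rle_or_lt w1 w1') as [h|h]; [exact h|exfalso].
  set (q := p + 1). assert (hq : 0 < q) by (unfold q; lra).
  set (f := fun t => Rpower t (-q)).
  assert (Ef : forall c t, c / Rpower t (p+1) = c * f t).
  { intros c t. unfold f, Rdiv. rewrite Rpower_Ropp. reflexivity. }
  rewrite !Ef in g1, g1'.
  assert (hw2 : w2 < w2').
  { apply Rmult_lt_reg_l with (1 - a'); [lra|]. nra. }
  set (m := (f w2' - f w1') / (w2' - w1')).
  assert (A1 : f w1 < f w1' + m * (w1 - w1')).
  { apply chord_lt; lra. }
  assert (A2 : f w2 < f w1' + m * (w2 - w1')).
  { apply chord_lt; lra. }
  assert (E : f w2' = f w1' + m * (w2' - w1')).
  { unfold m. field. lra. }
  assert (G1 : gamma < f w1' + m * (1 + beta - w1')).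
  { assert (a * f w1 < a * (f w1' + m * (w1 - w1'))) by (apply Rmult_lt_compat_l; lra).
    assert ((1-a) * f w2 < (1-a) * (f w1' + m * (w2 - w1'))) by (apply Rmult_lt_compat_l; lra).
    assert (m * (a * w1 + (1 - a) * w2) = m * (1 + beta)) by (rewrite m1; reflexivity).
    nra. }
  assert (G2 : gamma = f w1' + m * (1 + beta - w1')).
  { rewrite <- g1', E. rewrite <- m1'. ring. }
  lra.
Qed.
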